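(* Let $n\ge 2$. Then $\mathrm{Q}=\mathrm{A}\cap\mathrm{P}=\mathrm{B}\cap\mathrm{P}=\mathrm{A}\cap\mathrm{B}$. Moreover: <ul> <li>if $n\le 3$, then $\mathrm{Q}=\mathrm{P}=\mathrm{Z}^\times(\mathrm{C}^{\times(0)}\cup\mathrm{C}^{\times(1)})$;</li> <li>if $n=4$, then $\mathrm{Q}\ne\mathrm{P}$ and $\mathrm{A}\neq\mathrm{P}$.</li> </ul>
   Context: Let $\mathrm{C}$ be either the real Clifford algebra $C\ell_{p,q}$ with $p+q=n$, or the complex Clifford algebra $C\ell(\mathbb{C}^n)$. It has identity $e$ and generators $e_1,\dots,e_n$ satisfying $e_ae_b+e_be_a=2\eta_{ab}e$. In the real case $\eta=\mathrm{diag}(1,\dots,1,-1,\dots,-1)$ with $p$ entries $+1$ and $q$ entries $-1$. In the complex case $\eta=I_n$. $\mathrm{C}^k$ is the grade-$k$ subspace, spanned by the products $e_{a_1}\cdots e_{a_k}$ with $a_1<\dots<a_k$. The even subspace is $\mathrm{C}^{(0)}=\bigoplus_{k\text{ even}}\mathrm{C}^k$ and the odd subspace is $\mathrm{C}^{(1)}=\bigoplus_{k\text{ odd}}\mathrm{C}^k$. The grade involution $U\mapsto\hat U$ is the linear automorphism acting on $\mathrm{C}^k$ as $(-1)^k$. The reversion $U\mapsto\tilde U$ is the linear anti-automorphism acting on $\mathrm{C}^k$ as $(-1)^{k(k-1)/2}$. For $S\subseteq\mathrm{C}$, $S^\times$ is the set of elements of $S$ invertible in $\mathrm{C}$, and $\mathrm{C}^{\times(j)}:=(\mathrm{C}^{(j)})^\times$.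 $\mathrm{Z}$ is the center: $\mathrm{Z}=\mathrm{C}^0$ for $n$ even and $\mathrm{Z}=\mathrm{C}^0\oplus\mathrm{C}^n$ for $n$ odd. Define: <ul> <li>$\mathrm{P}:=\mathrm{Z}^\times(\mathrm{C}^{\times(0)}\cup\mathrm{C}^{\times(1)})=\{WT: W\in\mathrm{Z}^\times, T\in\mathrm{C}^{\times(0)}\cup\mathrm{C}^{\times(1)}\}$;</li> <li>$\mathrm{A}:=\{T\in\mathrm{C}^\times:\tilde TT\in\mathrm{Z}^\times\}$;</li> <li>$\mathrm{B}:=\{T\in\mathrm{C}^\times:\hat{\tilde T}T\in\mathrm{Z}^\times\}$;</li> <li>$\mathrm{Q}:=\{T\in\mathrm{P}:\tilde TT\in\mathrm{Z}^\times\}$.</li> </ul> *)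

(* Defs.v *)
From HB Require Import structures.
From mathcomp Require Import all_boot all_order all_algebra.
From mathcomp Require Import complex.
From mathcomp Require Import reals.
Set Implicit Arguments. Unset Strict Implicit. Unset Printing Implicit Defensive.
Import Order.TTheory GRing.Theory Num.Theory.
Local Open Scope ring_scope.

Section Clifford.
Variables (K : fieldType) (n : nat) (eta : 'I_n -> K).

(* Elements of the Clifford algebra: coordinates on the basis blades
   e_A = e_{a1} ... e_{ak} (a1 < ... < ak), indexed by subsets A of {0..n-1}. *)
Definition clif := {ffun {set 'I_n} -> K}.

(* e_A e_B = (-1)^{#{(a,b) in A x B | b < a}} (prod_{i in A :&: B} eta_i) e_{A (+) B} *)
Definition blade_coef (A B : {set 'I_n}) : K :=
  (-1) ^+ #|[set ab : 'I_n * 'I_n | (ab.1 \in A) && (ab.2 \in B) && (ab.2 < ab.1)%N]|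
  * \prod_(i in A :&: B) eta i.

Definition clif_mul (U V : clif) : clif :=
  [ffun C : {set 'I_n} =>
     \sum_(A : {set 'I_n}) \sum_(B : {set 'I_n} | (A :\: B) :|: (B :\: A) == C)
        U A * V B * blade_coef A B].

Definition clif_one : clif := [ffun A : {set 'I_n} => if A == set0 then 1 else 0].
Definition clif_gen (a : 'I_n) : clif := [ffun A : {set 'I_n} => if A == [set a] then 1 else 0].

Definition grade (k : nat) (U : clif) : Prop := forall A : {set 'I_n}, #|A| != k -> U A = 0.
Definition even_part (U : clif) : Prop := forall A : {set 'I_n}, odd #|A| -> U A = 0.
Definition odd_part (U : clif) : Prop := forall A : {set 'I_n}, ~~ odd #|A| -> U A = 0.

Definition ginv (U : clif) : clif := [ffun A : {set 'I_n} => (-1) ^+ #|A| * U A].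
Definition rev (U : clif) : clif := [ffun A : {set 'I_n} => (-1) ^+ ('C(#|A|, 2)) * U A].

Definition invertible (U : clif) : Prop :=
  exists V, clif_mul U V = clif_one /\ clif_mul V U = clif_one.

Definition center (U : clif) : Prop := forall V, clif_mul U V = clif_mul V U.

Definition Zx (W : clif) : Prop := center W /\ invertible W.
Definition Cx0 (T : clif) : Prop := even_part T /\ invertible T.
Definition Cx1 (T : clif) : Prop := odd_part T /\ invertible T.

Definition Pset (U : clif) : Prop :=
  exists W T, Zx W /\ (Cx0 T \/ Cx1 T) /\ U = clif_mul W T.
Definition Aset (T : clif) : Prop := invertible T /\ Zx (clif_mul (rev T) T).
Definition Bset (T : clif) : Prop := invertible T /\ Zx (clif_mul (ginv (rev T)) T).
Definition Qset (T : clif) : Prop := Pset T /\ Zx (clif_mul (rev T) T).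

Definition clifford_conclusion : Prop :=
  (forall T, Qset T <-> Aset T /\ Pset T) /\
  (forall T, Aset T /\ Pset T <-> Bset T /\ Pset T) /\
  (forall T, Bset T /\ Pset T <-> Aset T /\ Bset T) /\
  ((n <= 3)%N -> forall T, Qset T <-> Pset T) /\
  (n = 4%N -> (exists T, ~ (Qset T <-> Pset T)) /\ (exists T, ~ (Aset T <-> Pset T))).

End Clifford.

Definition eta_pq (K : fieldType) (p q : nat) : 'I_(p + q) -> K :=
  fun i => if (i < p)%N then 1 else -1.

(* Main.v *)
Require Import Defs.
From HB Require Import structures.
From mathcomp Require Import all_boot all_order all_algebra.
From mathcomp Require Import complex.
From mathcomp Require Import reals.
From mathcomp Require Import ring zify.
Set Implicit Arguments. Unset Strict Implicit. Unset Printing Implicit Defensive.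
Import Order.TTheory GRing.Theory Num.Theory.
Local Open Scope ring_scope.

Section Clif.
Variables (K : fieldType) (n : nat) (eta : 'I_n -> K).
Hypothesis eta2 : forall i, eta i ^+ 2 = 1.
Hypothesis charK : forall m, (m.+1)%:R != 0 :> K.

Local Notation cl := (clif K n).
Local Notation bc := (blade_coef eta).
Local Notation mul := (clif_mul eta).

Definition sd (A B : {set 'I_n}) := (A :\: B) :|: (B :\: A).

Lemma in_sd A B x : (x \in sd A B) = (x \in A) (+) (x \in B).
Proof. by rewrite !inE; case: (x \in A); case: (x \in B). Qed.

Lemma sdK A C : sd A (sd A C) = C.
Proof. by apply/setP=> x; rewrite !in_sd; case: (x \in A); case: (x \in C). Qed.

Lemma sdC A B : sd A B = sd B A.
Proof. by apply/setP=> x; rewrite !in_sd; case: (x \in A); case: (x \in B). Qed.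

Lemma sdA A B C : sd A (sd B C) = sd (sd A B) C.
Proof. by apply/setP=> x; rewrite !in_sd; case: (x \in A); case: (x \in B); case: (x \in C). Qed.

Lemma sdKr A B : sd (sd A B) B = A.
Proof. by apply/setP=> x; rewrite !in_sd; case: (x \in A); case: (x \in B). Qed.

Lemma sd0 A : sd A set0 = A.
Proof. by apply/setP=> x; rewrite !in_sd inE; case: (x \in A). Qed.

Lemma sdd A : sd A A = set0.
Proof. by apply/setP=> x; rewrite !in_sd inE; case: (x \in A). Qed.

Lemma mulE U V C : mul U V C = \sum_A U A * V (sd A C) * bc A (sd A C).
Proof.
rewrite ffunE; apply: eq_bigr => A _.
rewrite (big_pred1 (sd A C)) // => B /=.
apply/eqP/eqP => [<-|->]; first by rewrite -/(sd A B) sdK.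
by rewrite -/(sd A (sd A C)) sdK.
Qed.

Definition sgn (b : bool) : K := (-1) ^+ b.

Lemma card_sgn (T : finType) (P : pred T) :
  (-1) ^+ #|[set x | P x]| = \prod_x sgn (P x) :> K.
Proof.
rewrite -prodr_const big_mkcond /=; apply: eq_bigr => x _.
by rewrite inE /sgn; case: (P x).
Qed.

Lemma prod_eta (S : {set 'I_n}) : \prod_(i in S) eta i = \prod_i eta i ^+ (i \in S).
Proof. by rewrite big_mkcond; apply: eq_bigr => i _; case: (i \in S). Qed.

Lemma bcE A B : bc A B =
  (\prod_(ab : 'I_n * 'I_n) sgn ((ab.1 \in A) && (ab.2 \in B) && (ab.2 < ab.1)%N))
  * \prod_i eta i ^+ ((i \in A) && (i \in B)).
Proof.
rewrite /blade_coef card_sgn prod_eta; congr (_ * _).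
by apply: eq_bigr => i _; rewrite inE.
Qed.

Lemma sgnM a b : sgn a * sgn b = sgn (a (+) b).
Proof. by rewrite /sgn; case: a; case: b; rewrite ?mulrNN ?mulr1 ?mul1r. Qed.

Lemma cocycle A B C : bc A B * bc (sd A B) C = bc B C * bc A (sd B C).
Proof.
rewrite !bcE mulrACA [RHS]mulrACA -!big_split /=; congr (_ * _).
  apply: eq_bigr => ab _; rewrite !sgnM !in_sd.
  by case: (ab.1 \in A); case: (ab.1 \in B); case: (ab.2 \in B); case: (ab.2 \in C);
    case: (ab.2 < ab.1)%N.
apply: eq_bigr => i _; rewrite -!exprD !in_sd.
by case: (i \in A); case: (i \in B); case: (i \in C).
Qed.

Lemma clmulA : associative mul.
Proof.
move=> U V W; apply/ffunP=> D; rewrite [RHS]mulE [LHS]mulE; symmetry.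
under eq_bigr do rewrite mulE !mulr_suml.
rewrite exchange_big /=; apply: eq_bigr => A _.
rewrite (reindex (sd A)); last by exists (sd A) => X _; rewrite sdK.
rewrite mulE mulr_sumr mulr_suml; apply: eq_bigr => B _.
rewrite sdK.
have e1 : sd B (sd A D) = sd (sd A B) D by rewrite sdA (sdC B A).
have e2 : sd A D = sd B (sd (sd A B) D) by rewrite -e1 sdK.
rewrite e1 e2.
set C := sd (sd A B) D.
transitivity (U A * V B * W C * (bc A B * bc (sd A B) C)); first by ring.
by rewrite cocycle; ring.
Qed.

Definition basis (X : {set 'I_n}) : cl := [ffun D => if D == X then 1 else 0].

Lemma bc0l B : bc set0 B = 1.
Proof.
rewrite bcE big1 ?mul1r; last by move=> ab _; rewrite inE.
by rewrite big1 // => i _; rewrite inE.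
Qed.

Lemma bc0r A : bc A set0 = 1.
Proof.
rewrite bcE big1 ?mul1r; last by move=> ab _; rewrite inE andbF.
by rewrite big1 // => i _; rewrite inE andbF.
Qed.

Lemma mul_basis_l X V D : mul (basis X) V D = V (sd X D) * bc X (sd X D).
Proof.
rewrite mulE (bigD1 X) //= big1 ?addr0; first by rewrite ffunE eqxx mul1r.
by move=> A /negbTE nA; rewrite ffunE nA mul0r mul0r.
Qed.

Lemma mul_basis_r U Y D : mul U (basis Y) D = U (sd Y D) * bc (sd Y D) Y.
Proof.
rewrite mulE (bigD1 (sd Y D)) //= big1 ?addr0.
  by rewrite ffunE (sdKr Y D) eqxx mulr1.
move=> A nA; rewrite ffunE.
case: eqP => [e|]; last by rewrite mulr0 mul0r.
by case/eqP: nA; rewrite -e sdKr.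
Qed.

Lemma oneE : clif_one K n = basis set0.
Proof. by apply/ffunP=> D; rewrite !ffunE; case: eqP. Qed.

Lemma clmul1l : left_id (clif_one K n) mul.
Proof. by move=> V; apply/ffunP=> D; rewrite oneE mul_basis_l sdC sd0 bc0l mulr1. Qed.

Lemma clmul1r : right_id (clif_one K n) mul.
Proof. by move=> V; apply/ffunP=> D; rewrite oneE mul_basis_r sdC sd0 bc0r mulr1. Qed.

Lemma clmulDl : left_distributive mul +%R.
Proof.
move=> U V W; apply/ffunP=> D; rewrite [in RHS]ffunE !mulE -big_split /=.
by apply: eq_bigr => A _; rewrite ffunE !mulrDl.
Qed.

Lemma clmulDr : right_distributive mul +%R.
Proof.
move=> U V W; apply/ffunP=> D; rewrite [in RHS]ffunE !mulE -big_split /=.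
by apply: eq_bigr => A _; rewrite ffunE mulrDr !mulrDl.
Qed.

Lemma one_neq0 : clif_one K n != 0.
Proof. by apply/eqP=> /ffunP /(_ set0); rewrite !ffunE eqxx; apply/eqP; exact: oner_neq0. Qed.

Definition CL := cl.
HB.instance Definition _ := GRing.Zmodule.on CL.
HB.instance Definition _ := GRing.Zmodule_isNzRing.Build CL clmulA clmul1l clmul1r clmulDl clmulDr one_neq0.

Lemma mulCL (U V : cl) : mul U V = (U : CL) * (V : CL).
Proof. by []. Qed.
Lemma oneCL : clif_one K n = (1 : CL).
Proof. by []. Qed.


Definition rv (U : CL) : CL := Defs.rev U.
Definition gi (U : CL) : CL := ginv U.
Definition sc (c : K) : CL := [ffun A => if A == set0 then c else 0].
Definition II : CL := basis setT.

Lemma rvE (U : CL) A : rv U A = (-1) ^+ 'C(#|A|, 2) * U A.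
Proof. by rewrite /rv /Defs.rev ffunE. Qed.
Lemma giE (U : CL) A : gi U A = (-1) ^+ #|A| * U A.
Proof. by rewrite /gi /ginv ffunE. Qed.
Lemma scE c A : sc c A = if A == set0 then c else 0.
Proof. by rewrite ffunE. Qed.
Lemma IIE A : II A = if A == setT then 1 else 0.
Proof. by rewrite ffunE. Qed.
Lemma coefD (U V : CL) A : (U + V) A = U A + V A.
Proof. by rewrite ffunE. Qed.
Lemma coefN (U : CL) A : (- U) A = - U A.
Proof. by rewrite ffunE. Qed.
Lemma coef0 A : (0 : CL) A = 0.
Proof. by rewrite ffunE. Qed.
Lemma coef1 A : (1 : CL) A = if A == set0 then 1 else 0.
Proof. by rewrite /= /clif_one ffunE. Qed.
Lemma coefM (U V : CL) C : (U * V) C = \sum_A U A * V (sd A C) * bc A (sd A C).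
Proof. exact: mulE. Qed.
Lemma coefMb_l X (V : CL) D : ((basis X : CL) * V) D = V (sd X D) * bc X (sd X D).
Proof. exact: mul_basis_l. Qed.
Lemma coefMb_r (U : CL) Y D : (U * (basis Y : CL)) D = U (sd Y D) * bc (sd Y D) Y.
Proof. exact: mul_basis_r. Qed.

Lemma CLP (U V : CL) : (forall A, U A = V A) -> U = V.
Proof. by move=> h; apply/ffunP. Qed.

Lemma two_neq0 : (2 : K) != 0.
Proof. exact: (charK 1). Qed.

Lemma eqNx (x : K) : x = - x -> x = 0.
Proof.
move=> h; have : x * 2 = 0 by rewrite mulrDr mulr1 {1}h addNr.
by move/eqP; rewrite mulf_eq0 (negbTE two_neq0) orbF => /eqP.
Qed.

Lemma sgn_card (S : {set 'I_n}) : (-1) ^+ #|S| = \prod_x sgn (x \in S) :> K.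
Proof.
rewrite -prodr_const big_mkcond /=; apply: eq_bigr => x _.
by rewrite /sgn; case: (x \in S).
Qed.

Lemma sgn_sd A B : (-1) ^+ #|sd A B| = (-1) ^+ #|A| * (-1) ^+ #|B| :> K.
Proof.
rewrite !sgn_card -big_split /=; apply: eq_bigr => x _.
by rewrite sgnM in_sd.
Qed.

Lemma sgn_sq b : sgn b * sgn b = 1.
Proof. by rewrite sgnM addbb. Qed.

Lemma pair_sum (F : 'I_n * 'I_n -> nat) :
  (\sum_ab F ab = \sum_a \sum_b F (a, b))%N.
Proof. by rewrite pair_big; apply: eq_bigr => -[]. Qed.

Lemma card_set_sum (T : finType) (P : pred T) :
  #|[set x | P x]| = (\sum_x (P x : nat))%N.
Proof.
rewrite -sum1_card big_mkcond /=; apply: eq_bigr => x _.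
by rewrite inE; case: (P x).
Qed.

Lemma pair_count (X : {set 'I_n}) :
  #|[set ab : 'I_n * 'I_n | (ab.1 \in X) && (ab.2 \in X) && (ab.2 < ab.1)%N]| = 'C(#|X|, 2).
Proof.
set L := #|_|.
have hg : (\sum_(ab : 'I_n * 'I_n) ((ab.1 \in X) && (ab.2 \in X) && (ab.1 < ab.2)%N : nat))%N = L.
  have swapI : injective (fun ab : 'I_n * 'I_n => (ab.2, ab.1)).
    by move=> [a b] [c d] /= [-> ->].
  rewrite /L card_set_sum (reindex_inj swapI) /=.
  by apply: eq_bigr => -[a b] /=; rewrite (andbC (b \in X)).
have hh : (\sum_(ab : 'I_n * 'I_n) ((ab.1 \in X) && (ab.2 \in X) && (ab.1 == ab.2) : nat))%N = #|X|.
  rewrite pair_sum -sum1_card [RHS]big_mkcond /=; apply: eq_bigr => a _.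
  rewrite (bigD1 a) //= big1 ?addn0; first by rewrite eqxx andbT andbb; case: (a \in X).
  by move=> b /negbTE nb; rewrite eq_sym nb andbF.
have hX : (#|X| * #|X| = L + L + #|X|)%N.
  rewrite -cardsX.
  have -> : setX X X = [set ab : 'I_n * 'I_n | (ab.1 \in X) && (ab.2 \in X)].
    by apply/setP => ab; rewrite !inE.
  rewrite card_set_sum -{2}hg -hh /L card_set_sum -!big_split /=.
  apply: eq_bigr => -[a b] /=.
  case: (a \in X); case: (b \in X) => //=.
  case: (eqVneq a b) => [->|nab]; first by rewrite ltnn /=.
  move=> _; case: (ltngtP a b) => // e.
  by have := nab; rewrite (val_inj e) eqxx.
rewrite bin2; have -> : (#|X| * #|X|.-1 = L.*2)%N.
  by rewrite -subn1 mulnBr muln1 hX -addnn addnK.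
by rewrite doubleK.
Qed.

Lemma rsgnE (X : {set 'I_n}) : (-1) ^+ 'C(#|X|, 2) =
  \prod_(ab : 'I_n * 'I_n) sgn ((ab.1 \in X) && (ab.2 \in X) && (ab.2 < ab.1)%N) :> K.
Proof. by rewrite -pair_count card_sgn. Qed.

Lemma rev_bc A B : (-1) ^+ 'C(#|sd A B|, 2) * bc A B =
  (-1) ^+ 'C(#|A|, 2) * (-1) ^+ 'C(#|B|, 2) * bc B A :> K.
Proof.
rewrite !rsgnE !bcE mulrA [RHS]mulrA -!big_split /=; congr (_ * _).
  apply: eq_bigr => ab _; rewrite !sgnM !in_sd.
  by case: (ab.1 \in A); case: (ab.1 \in B); case: (ab.2 \in A); case: (ab.2 \in B);
    case: (ab.2 < ab.1)%N.
by apply: eq_bigr => i _; rewrite andbC.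
Qed.


Lemma sgnK k : (-1) ^+ k * (-1) ^+ k = 1 :> K.
Proof. by rewrite -expr2 sqrr_sign. Qed.

Lemma gi_mul (U V : CL) : gi (U * V) = gi U * gi V.
Proof.
apply: CLP => D; rewrite giE !coefM mulr_sumr; apply: eq_bigr => A _.
have h := sgn_sd A (sd A D); rewrite sdK in h.
by rewrite !giE h; ring.
Qed.

Lemma rv_mul (U V : CL) : rv (U * V) = rv V * rv U.
Proof.
apply: CLP => D; rewrite rvE !coefM mulr_sumr.
rewrite [RHS](reindex (fun A => sd A D)); last first.
  by exists (fun B => sd B D) => B _; rewrite sdKr.
apply: eq_bigr => A _; rewrite sdKr !rvE.
have h := rev_bc A (sd A D); rewrite sdK in h.
transitivity (U A * V (sd A D) * ((-1) ^+ 'C(#|D|, 2) * bc A (sd A D))); first by ring.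
by rewrite h; ring.
Qed.

Lemma rvK (U : CL) : rv (rv U) = U.
Proof. by apply: CLP => A; rewrite !rvE mulrA sgnK mul1r. Qed.
Lemma giK (U : CL) : gi (gi U) = U.
Proof. by apply: CLP => A; rewrite !giE mulrA sgnK mul1r. Qed.
Lemma gi_rv (U : CL) : gi (rv U) = rv (gi U).
Proof. by apply: CLP => A; rewrite !giE !rvE giE mulrCA. Qed.

Lemma rvD (U V : CL) : rv (U + V) = rv U + rv V.
Proof. by apply: CLP => A; rewrite !(rvE, coefD) mulrDr. Qed.
Lemma giD (U V : CL) : gi (U + V) = gi U + gi V.
Proof. by apply: CLP => A; rewrite !(giE, coefD) mulrDr. Qed.
Lemma rvN (U : CL) : rv (- U) = - rv U.
Proof. by apply: CLP => A; rewrite !(rvE, coefN) mulrN. Qed.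
Lemma giN (U : CL) : gi (- U) = - gi U.
Proof. by apply: CLP => A; rewrite !(giE, coefN) mulrN. Qed.

Lemma rv_sc c : rv (sc c) = sc c.
Proof.
apply: CLP => A; rewrite rvE scE; case: eqP => [->|]; last by rewrite mulr0.
by rewrite cards0 mul1r.
Qed.
Lemma gi_sc c : gi (sc c) = sc c.
Proof.
apply: CLP => A; rewrite giE scE; case: eqP => [->|]; last by rewrite mulr0.
by rewrite cards0 mul1r.
Qed.

Lemma sc_mull c (U : CL) A : (sc c * U) A = c * U A.
Proof.
rewrite coefM (bigD1 set0) //= big1 ?addr0.
  by rewrite scE eqxx -/(sd set0 A) sdC sd0 bc0l mulr1.
by move=> B /negbTE nB; rewrite scE nB !mul0r.
Qed.

Lemma sd_eq0 A B : (sd A B == set0) = (A == B).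
Proof.
apply/eqP/eqP => [h|->]; last exact: sdd.
by apply/setP => x; move/setP: h => /(_ x); rewrite in_sd inE; case: (x \in A); case: (x \in B).
Qed.

Lemma sc_mulr c (U : CL) A : (U * sc c) A = U A * c.
Proof.
rewrite coefM (bigD1 A) //= big1 ?addr0.
  by rewrite sdd scE eqxx bc0r mulr1.
by move=> B nB; rewrite scE sd_eq0 (negbTE nB) mulr0 mul0r.
Qed.

Lemma sc_central c (U : CL) : sc c * U = U * sc c.
Proof. by apply: CLP => A; rewrite sc_mull sc_mulr mulrC. Qed.

Lemma scM a b : sc (a * b) = sc a * sc b.
Proof. by apply: CLP => A; rewrite sc_mull !scE; case: eqP; rewrite ?mulr0. Qed.
Lemma scD a b : sc (a + b) = sc a + sc b.
Proof. by apply: CLP => A; rewrite coefD !scE; case: eqP; rewrite ?addr0. Qed.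
Lemma scN a : sc (- a) = - sc a.
Proof. by apply: CLP => A; rewrite coefN !scE; case: eqP; rewrite ?oppr0. Qed.
Lemma sc1 : sc 1 = 1.
Proof. by []. Qed.
Lemma sc0 : sc 0 = 0.
Proof. by apply: CLP => A; rewrite coef0 !scE; case: eqP. Qed.
Lemma sc_inj a b : sc a = sc b -> a = b.
Proof. by move/(congr1 (fun U : CL => U set0)); rewrite !scE eqxx. Qed.

Lemma scMl a (U : CL) A : (sc a * U) A = a * U A.
Proof. exact: sc_mull. Qed.

Lemma rv1 : rv 1 = 1.
Proof. by rewrite -sc1 rv_sc. Qed.
Lemma gi1 : gi 1 = 1.
Proof. by rewrite -sc1 gi_sc. Qed.

Definition s0 := bc setT setT.

Lemma sd_eqL X D : (sd X D == X) = (D == set0).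
Proof.
apply/eqP/eqP => [h|->]; last exact: sd0.
by rewrite -(sdK X D) h sdd.
Qed.

Lemma II_sq : II * II = sc s0.
Proof.
apply: CLP => D; rewrite coefMb_l IIE sd_eqL scE.
by case: eqP => [->|]; rewrite ?mul0r // sd0 mul1r.
Qed.

Lemma prodI a b c d :
  (sc a + sc b * II) * (sc c + sc d * II) = sc (a * c + b * d * s0) + sc (a * d + b * c) * II.
Proof.
rewrite mulrDl !mulrDr -scM mulrA -scM -mulrA -sc_central mulrA -scM.
rewrite -mulrA [II * (_ * _)]mulrA -sc_central -mulrA II_sq mulrA -!scM.
rewrite !scD mulrDl.
rewrite -!addrA; congr (_ + _).
by rewrite [RHS]addrC !addrA.
Qed.


Definition cen (U : CL) := forall V : CL, U * V = V * U.
Definition inv (U : CL) := exists V : CL, U * V = 1 /\ V * U = 1.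
Definition zx U := cen U /\ inv U.

Lemma inv_mul U V : inv U -> inv V -> inv (U * V).
Proof.
case=> X [h1 h2] [Y [h3 h4]]; exists (Y * X); split.
  by rewrite mulrA -(mulrA U) h3 mulr1 h1.
by rewrite mulrA -(mulrA Y) h2 mulr1 h4.
Qed.

Lemma cen_mul U V : cen U -> cen V -> cen (U * V).
Proof. by move=> hU hV W; rewrite -mulrA hV mulrA hU -mulrA. Qed.

Lemma cen_inv U X : cen U -> U * X = 1 -> X * U = 1 -> cen X.
Proof.
move=> hU h1 h2 V.
by rewrite -[X * V]mulr1 -h1 mulrA -(mulrA X V U) -hU mulrA h2 mul1r.
Qed.

Lemma cenD U V : cen U -> cen V -> cen (U + V).
Proof. by move=> hU hV W; rewrite mulrDl mulrDr hU hV. Qed.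
Lemma cenN U : cen U -> cen (- U).
Proof. by move=> hU W; rewrite mulNr mulrN hU. Qed.
Lemma cen_sc c : cen (sc c).
Proof. by move=> W; rewrite sc_central. Qed.
Lemma cen1 : cen 1.
Proof. by move=> W; rewrite mul1r mulr1. Qed.

Lemma inv_rv U : inv U -> inv (rv U).
Proof. by case=> X [h1 h2]; exists (rv X); rewrite -!rv_mul h1 h2 rv1. Qed.
Lemma inv_gi U : inv U -> inv (gi U).
Proof. by case=> X [h1 h2]; exists (gi X); rewrite -!gi_mul h1 h2 gi1. Qed.

Lemma cen_rv U : cen U -> cen (rv U).
Proof.
move=> hU V; rewrite -[V in LHS]rvK -rv_mul -hU rv_mul rvK //.
Qed.
Lemma cen_gi U : cen U -> cen (gi U).
Proof.
move=> hU V; rewrite -[V in LHS]giK -gi_mul hU gi_mul giK //.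
Qed.

Lemma zx_mul U V : zx U -> zx V -> zx (U * V).
Proof. by move=> [h1 h2] [h3 h4]; split; [apply: cen_mul | apply: inv_mul]. Qed.

Lemma zx_inv U : zx U -> exists X, zx X /\ U * X = 1 /\ X * U = 1.
Proof.
move=> [hc [X [h1 h2]]]; exists X; split=> //; split; first exact: cen_inv h1 h2.
by exists U.
Qed.

Lemma zx_rv U : zx U -> zx (rv U).
Proof. by move=> [h1 h2]; split; [apply: cen_rv | apply: inv_rv]. Qed.
Lemma zx_gi U : zx U -> zx (gi U).
Proof. by move=> [h1 h2]; split; [apply: cen_gi | apply: inv_gi]. Qed.

Lemma zx_opp U : zx U -> zx (- U).
Proof.
move=> [hc [X [h1 h2]]]; split; first exact: cenN.
by exists (- X); rewrite !mulrNN.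
Qed.

Lemma zx_opp_iff U : zx (- U) <-> zx U.
Proof. by split => [/zx_opp|/zx_opp //]; rewrite opprK. Qed.

Lemma zxM_iff c M : zx c -> (zx (c * M) <-> zx M).
Proof.
move=> hc; split; last exact: zx_mul.
have [X [hX [h1 h2]]] := zx_inv hc.
by move=> h; have := zx_mul hX h; rewrite mulrA h2 mul1r.
Qed.

Lemma sgn_sq2 b : sgn b ^+ 2 = 1.
Proof. exact: sqrr_sign. Qed.

Lemma bc_sq A B : bc A B ^+ 2 = 1.
Proof.
rewrite bcE exprMn -!prodrXl.
rewrite big1 ?mul1r => [|ab _]; last exact: sgn_sq2.
by rewrite big1 // => i _; rewrite exprAC eta2 expr1n.
Qed.

Lemma bc_neq0 A B : bc A B != 0.
Proof.
apply/eqP => h; have := bc_sq A B; rewrite h expr0n /= => /eqP.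
by rewrite eq_sym oner_eq0.
Qed.

Lemma prod_pair (F : 'I_n * 'I_n -> K) : \prod_ab F ab = \prod_a \prod_b F (a, b).
Proof. by rewrite pair_big; apply: eq_bigr => -[]. Qed.

Lemma bc_swap1 B i : bc B [set i] = (-1) ^+ #|B :\ i| * bc [set i] B.
Proof.
rewrite !bcE mulrA; congr (_ * _); last first.
  by apply: eq_bigr => x _; rewrite andbC.
have -> : \prod_(ab : 'I_n * 'I_n) sgn ((ab.1 \in B) && (ab.2 \in [set i]) && (ab.2 < ab.1)%N)
   = \prod_a sgn ((a \in B) && (i < a)%N).
  rewrite prod_pair; apply: eq_bigr => a _.
  rewrite (bigD1 i) //= big1 ?mulr1; first by rewrite in_set1 eqxx andbT.
  by move=> b /negbTE nb; rewrite in_set1 nb andbF.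
have -> : \prod_(ab : 'I_n * 'I_n) sgn ((ab.1 \in [set i]) && (ab.2 \in B) && (ab.2 < ab.1)%N)
   = \prod_b sgn ((b \in B) && (b < i)%N).
  rewrite prod_pair (bigD1 i) //= [X in _ * X]big1 ?mulr1.
    by apply: eq_bigr => b _; rewrite in_set1 eqxx.
  by move=> a /negbTE na; rewrite big1 // => b _; rewrite in_set1 na.
have -> : (-1) ^+ #|B :\ i| =
    (\prod_a sgn ((a \in B) && (i < a)%N)) * \prod_b sgn ((b \in B) && (b < i)%N) :> K.
  rewrite sgn_card -big_split /=; apply: eq_bigr => x _; rewrite sgnM !inE.
  case: (x \in B); rewrite ?andbF ?andbT //=.
  case: (ltngtP i x) => [h|h|e] /=.
  - have hx : x != i by apply/eqP => e; move: h; rewrite e ltnn.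
    by rewrite hx.
  - have hx : x != i by apply/eqP => e; move: h; rewrite e ltnn.
    by rewrite hx.
  - by rewrite (val_inj e) eqxx.
rewrite -mulrA -big_split /= [X in _ * X]big1 ?mulr1 // => b _; exact: sgn_sq.
Qed.


Lemma sd_sd1 X Y : sd X (sd Y X) = Y.
Proof. by rewrite sdC sdKr. Qed.

Lemma cen_coef W B i : cen W -> W B * bc B [set i] = W B * bc [set i] B.
Proof.
move=> hW; have := congr1 (fun U : CL => U (sd B [set i])) (hW (basis [set i])).
by rewrite /= coefMb_r coefMb_l sd_sd1.
Qed.

Lemma sgn_odd k : odd k -> (-1) ^+ k = -1 :> K.
Proof. by move=> h; rewrite -signr_odd h expr1. Qed.

Lemma sgn_even k : ~~ odd k -> (-1) ^+ k = 1 :> K.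
Proof. by move=> h; rewrite -signr_odd (negbTE h) expr0. Qed.

Lemma cen_coef_odd W B i : cen W -> odd #|B :\ i| -> W B = 0.
Proof.
move=> hW hk; have := cen_coef B i hW; rewrite bc_swap1 sgn_odd // mulN1r mulrN => h.
have : W B * bc [set i] B = 0 by apply: eqNx; rewrite -{1}h.
by move/eqP; rewrite mulf_eq0 (negbTE (bc_neq0 _ _)) orbF => /eqP.
Qed.

Lemma cen_zero W B : cen W -> B != set0 -> W B != 0 -> B = setT /\ odd n.
Proof.
move=> hW hB hWB.
have key : forall i, ~~ odd #|B :\ i|.
  by move=> i; apply/negP => /(cen_coef_odd hW) h; rewrite h eqxx in hWB.
have [i iB] := set0Pn B hB.
have oB : odd #|B| by rewrite (cardsD1 i B) iB /= (negbTE (key i)).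
have BT : B = setT.
  apply/setP => j; rewrite inE; apply/negPn/negP => jB.
  by move: (key j) oB; rewrite (cardsD1 j B) (negbTE jB) add0n => /negbTE ->.
by split => //; move: oB; rewrite BT cardsT card_ord.
Qed.

Lemma coef_comb a b D : (sc a + sc b * II) D =
  (if D == set0 then a else 0) + b * (if D == setT then 1 else 0).
Proof. by rewrite coefD scE sc_mull IIE. Qed.

Lemma cen_char W : (0 < n)%N -> cen W ->
  W = sc (W set0) + sc (W setT) * II /\ gi W = sc (W set0) + sc (- W setT) * II.
Proof.
move=> n0 hW.
have T0 : (setT : {set 'I_n}) != set0 by apply/set0Pn; exists (Ordinal n0); rewrite inE.
have WT : ~~ odd n -> W setT = 0.
  move=> ev; apply/eqP; apply/negPn/negP => h.
  by have [_ o] := cen_zero hW T0 h; rewrite o in ev.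
have WD : forall D, D != set0 -> D != setT -> W D = 0.
  move=> D D0 DT; apply/eqP; apply/negPn/negP => h.
  by have [e _] := cen_zero hW D0 h; rewrite e eqxx in DT.
split; apply: CLP => D; rewrite coef_comb ?giE.
  case: (eqVneq D set0) => [->|D0]; first by rewrite eq_sym (negbTE T0) mulr0 addr0.
  case: (eqVneq D setT) => [->|DT]; first by rewrite add0r mulr1.
  by rewrite add0r mulr0 WD.
case: (eqVneq D set0) => [->|D0].
  by rewrite eq_sym (negbTE T0) mulr0 addr0 cards0 expr0 mul1r.
case: (eqVneq D setT) => [->|DT].
  rewrite add0r mulr1 cardsT card_ord.
  case/boolP: (odd n) => o; first by rewrite sgn_odd // mulN1r.
  by rewrite WT // mulr0 oppr0.
by rewrite add0r mulr0 WD // mulr0.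
Qed.


Lemma inv_comb x y : x * x + y * (- y) * s0 != 0 -> inv (sc x + sc y * II).
Proof.
move=> d0; set d := x * x + y * (- y) * s0.
exists (sc d^-1 * (sc x + sc (- y) * II)); split.
  rewrite mulrA -sc_central -mulrA prodI.
  have -> : x * - y + y * x = 0 by ring.
  by rewrite sc0 mul0r addr0 -scM mulVf.
rewrite -mulrA prodI.
have -> : x * y + - y * x = 0 by ring.
have -> : x * x + - y * y * s0 = d by rewrite /d; ring.
by rewrite sc0 mul0r addr0 -scM mulVf.
Qed.

Lemma AB_step (T k : CL) a b e : inv T -> zx k -> gi T = k * T ->
  k = sc a + sc b * II -> gi k = sc a + sc (- b) * II -> gi k * k = 1 -> e * e = 1 ->
  (1 + e * a) * (1 + e * a) + (e * b) * (- (e * b)) * s0 != 0 ->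
  exists W S, zx W /\ gi S = sc e * S /\ inv S /\ T = W * S.
Proof.
move=> iT [kc ki] hgT hk hgk hkk ee d0.
set W0 : CL := 1 + sc e * k.
have W0c : cen W0 by apply: cenD; [exact: cen1 | apply: cen_mul; [exact: cen_sc | exact: kc]].
have W0e : W0 = sc (1 + e * a) + sc (e * b) * II.
  by rewrite /W0 hk mulrDr mulrA -!scM scD -sc1 addrA.
have iW0 : inv W0 by rewrite W0e; apply: inv_comb.
have [Y [hY1 hY2]] := iW0.
have zY : zx Y by split; [apply: (cen_inv W0c hY1 hY2) | exists W0].
exists Y, (W0 * T); split=> //; split; last split.
- rewrite gi_mul hgT mulrA [RHS]mulrA; congr (_ * _).
  rewrite /W0 giD gi1 gi_mul gi_sc mulrDl mul1r -mulrA hkk mulr1.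
  by rewrite mulrDr mulr1 mulrA -scM ee sc1 mul1r addrC.
- exact: inv_mul.
- by rewrite mulrA hY2 mul1r.
Qed.

Lemma AB_P (T : CL) : (0 < n)%N -> inv T -> zx (rv T * T) -> zx (gi (rv T) * T) ->
  exists W S, zx W /\ (gi S = S \/ gi S = - S) /\ inv S /\ T = W * S.
Proof.
move=> n0 iT zl zm; have [X [hX1 hX2]] := iT.
set l := rv T * T; set m := gi (rv T) * T.
have h1 : rv T = l * X by rewrite /l -mulrA hX1 mulr1.
have h2 : gi (rv T) = m * X by rewrite /m -mulrA hX1 mulr1.
have [l' [zl' [hl1 hl2]]] := zx_inv (zx_gi zl).
have hgX : gi X = (l' * m) * X.
  by rewrite -mulrA -h2 h1 gi_mul mulrA hl2 mul1r.
have zn : zx (l' * m) by apply: zx_mul.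
have [k [zk [hk1 hk2]]] := zx_inv zn.
have hgT : gi T = k * T.
  have e1 : gi T * (l' * m) = T.
    by rewrite -[LHS]mulr1 -hX2 mulrA -(mulrA _ _ X) -hgX -gi_mul hX1 gi1 mul1r.
  have [kc _] := zk.
  by rewrite kc -{2}e1 -mulrA hk1 mulr1.
have hkk : gi k * k = 1.
  have e2 : gi k * k * T = T by rewrite -mulrA -hgT -gi_mul -hgT giK.
  by rewrite -[LHS]mulr1 -hX1 mulrA e2.
have [kc _] := zk.
have [hk hgk] := cen_char n0 kc.
set a := k set0 in hk hgk; set b := k setT in hk hgk.
have hab : a * a + (- b) * b * s0 = 1.
  apply: sc_inj; rewrite sc1 -hkk hgk [k in RHS]hk prodI.
  have -> : a * b + - b * a = 0 by ring.
  by rewrite sc0 mul0r addr0.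
case: (eqVneq ((1 + 1 * a) * (1 + 1 * a) + (1 * b) * (- (1 * b)) * s0) 0) => d1.
  have d2 : (1 + -1 * a) * (1 + -1 * a) + (-1 * b) * (- (-1 * b)) * s0 != 0.
    apply/eqP => d2; have := charK 3.
    have -> : (3.+1)%:R = ((1 + 1 * a) * (1 + 1 * a) + (1 * b) * (- (1 * b)) * s0)
      + ((1 + -1 * a) * (1 + -1 * a) + (-1 * b) * (- (-1 * b)) * s0)
      - 2 * (a * a + (- b) * b * s0) + 2 :> K by ring.
    by rewrite d1 d2 hab; apply/negP; rewrite negbK; apply/eqP; ring.
  have [W [S [zW [hS [iS hT]]]]] := AB_step iT zk hgT hk hgk hkk (etrans (mulrNN 1 1) (mulr1 1)) d2.
  exists W, S; split=> //; split; last by [].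
  by right; rewrite hS scN sc1 mulN1r.
have [W [S [zW [hS [iS hT]]]]] := AB_step iT zk hgT hk hgk hkk (mulr1 1) d1.
exists W, S; split=> //; split; last by [].
by left; rewrite hS sc1 mul1r.
Qed.


Lemma evenE (S : CL) : even_part S <-> gi S = S.
Proof.
split => [h|h A oA].
  apply: CLP => A; rewrite giE; case/boolP: (odd #|A|) => o; first by rewrite h // mulr0.
  by rewrite sgn_even // mul1r.
have := congr1 (fun U : CL => U A) h; rewrite /= giE sgn_odd // mulN1r => e.
by apply: eqNx; rewrite e.
Qed.

Lemma oddE (S : CL) : odd_part S <-> gi S = - S.
Proof.
split => [h|h A oA].
  apply: CLP => A; rewrite giE coefN; case/boolP: (odd #|A|) => o.
    by rewrite sgn_odd // mulN1r.
  by rewrite h // mulr0 oppr0.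
have := congr1 (fun U : CL => U A) h; rewrite /= giE coefN sgn_even // mul1r => e.
exact: eqNx.
Qed.

Lemma zxE (U : CL) : Zx eta U <-> zx U.
Proof. exact: iff_refl. Qed.

Lemma PsetE (T : CL) : Pset eta T <->
  exists W S : CL, zx W /\ ((gi S = S \/ gi S = - S) /\ inv S) /\ T = W * S.
Proof.
split.
  case=> W [S [zW [hS e]]]; exists W, S; split => //; split => //.
  case: hS => [[ev iS]|[od iS]]; split => //; [left; exact/evenE | right; exact/oddE].
case=> W [S [zW [[hS iS] e]]]; exists W, S; split => //; split => //.
by case: hS => h; [left|right]; split => //; [exact/evenE | exact/oddE].
Qed.

Lemma P_inv (T : CL) : Pset eta T -> inv T.
Proof. by case/PsetE => W [S [[_ iW] [[_ iS] ->]]]; apply: inv_mul. Qed.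

Lemma rvWS (W S : CL) : cen W -> rv (W * S) * (W * S) = (rv W * W) * (rv S * S).
Proof.
move=> Wc; have c := cen_mul (cen_rv Wc) Wc.
transitivity (rv S * (rv W * W) * S); first by rewrite rv_mul !mulrA.
by rewrite -c !mulrA.
Qed.

Lemma giWS (W S : CL) : cen W -> gi (rv (W * S)) * (W * S) = (gi (rv W) * W) * (gi (rv S) * S).
Proof.
move=> Wc; have c := cen_mul (cen_gi (cen_rv Wc)) Wc.
transitivity (gi (rv S) * (gi (rv W) * W) * S); first by rewrite rv_mul gi_mul !mulrA.
by rewrite -c !mulrA.
Qed.

Lemma PZ (W S : CL) : zx W -> (gi S = S \/ gi S = - S) ->
  (zx (rv (W * S) * (W * S)) <-> zx (rv S * S)) /\
  (zx (gi (rv (W * S)) * (W * S)) <-> zx (rv S * S)).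
Proof.
move=> zW hS; have [Wc Wi] := zW.
rewrite rvWS // giWS //; split; first by apply: zxM_iff; apply: zx_mul => //; exact: zx_rv.
rewrite zxM_iff; last by apply: zx_mul => //; apply: zx_gi; exact: zx_rv.
rewrite gi_rv; case: hS => ->; first by [].
by rewrite rvN mulNr zx_opp_iff.
Qed.

Lemma small (M : CL) : (n <= 3)%N -> gi M = M -> rv M = M -> M = sc (M set0).
Proof.
move=> n3 hg hr; apply: CLP => A; rewrite scE.
case: eqP => [->|/eqP A0] //.
case/boolP: (odd #|A|) => o; first by move/evenE: hg => /(_ A o).
have c3 : (#|A| <= 3)%N by apply: leq_trans n3; rewrite -[X in (_ <= X)%N]card_ord max_card.
have c0 : (0 < #|A|)%N by rewrite card_gt0.
have c2 : #|A| = 2%N.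
  move: c3 c0 o; case: #|A| => [//|[//|[//|[//|]]]] m /=.
  by [].
have := congr1 (fun U : CL => U A) hr; rewrite /= rvE c2 /= expr1 mulN1r => e.
by apply: eqNx; rewrite e.
Qed.

Lemma gi_II : gi II = sc ((-1) ^+ n) * II.
Proof.
apply: CLP => D; rewrite giE sc_mull !IIE.
by case: eqP => [->|]; rewrite ?mulr0 // cardsT card_ord.
Qed.

Lemma rv_II : rv II = sc ((-1) ^+ 'C(n, 2)) * II.
Proof.
apply: CLP => D; rewrite rvE sc_mull !IIE.
by case: eqP => [->|]; rewrite ?mulr0 // cardsT card_ord.
Qed.

Lemma s0_sq : s0 ^+ 2 = 1.
Proof. exact: bc_sq. Qed.


Lemma ex4 : n = 4%N -> exists T : CL, Pset eta T /\ ~ zx (rv T * T).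
Proof.
move=> n4; have n0 : (0 < n)%N by rewrite n4.
set i := Ordinal n0.
set T := sc 1 + sc 2 * II.
have T0 : (setT : {set 'I_n}) != set0 by apply/set0Pn; exists i; rewrite inE.
have d0 : (1 : K) * 1 + 2 * (- 2) * s0 != 0.
  apply/eqP => h; have := charK 14.
  have -> : (14.+1)%:R = (1 * 1 + 2 * (- 2) * s0) * (- 1 - 4 * s0) - 16 * (s0 ^+ 2 - 1) :> K by ring.
  by rewrite h s0_sq; apply/negP; rewrite negbK; apply/eqP; ring.
exists T; split.
  apply/PsetE; exists 1, T; split; first by split; [exact: cen1 | exists 1; rewrite mul1r].
  split; last by rewrite mul1r.
  split; last exact: inv_comb.
  left; rewrite /T giD gi_sc gi_mul gi_sc gi_II.
  have -> : (-1) ^+ n = 1 :> K by rewrite sgn_even // n4.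
  by rewrite sc1 mul1r.
have hrT : rv T = T.
  rewrite /T rvD rv_sc rv_mul rv_sc rv_II.
  have -> : (-1) ^+ 'C(n, 2) = 1 :> K by rewrite sgn_even // n4.
  by rewrite sc1 mul1r sc_central.
rewrite hrT /T prodI => -[Mc _].
have := cen_coef setT i Mc; rewrite bc_swap1.
have e : (n = 1 + #|[set: 'I_n] :\ i|)%N.
  by have := cardsD1 i [set: 'I_n]; rewrite cardsT card_ord in_setT.
have hk : #|[set: 'I_n] :\ i| = 3%N by lia.
rewrite hk sgn_odd // mulN1r mulrN coef_comb (negbTE T0) eqxx add0r mulr1 => h.
have : (1 * 2 + 2 * 1) * bc [set i] setT = 0 by apply: eqNx; rewrite -{1}h.
move/eqP; rewrite mulf_eq0 (negbTE (bc_neq0 _ _)) orbF.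
have -> : (1 * 2 + 2 * 1 : K) = (3.+1)%:R by ring.
by rewrite (negbTE (charK 3)).
Qed.

Lemma conclusion : (2 <= n)%N -> clifford_conclusion eta.
Proof.
move=> n2; have n0 : (0 < n)%N by apply: leq_trans n2.
have c2 : forall T : CL, (Aset eta T /\ Pset eta T) <-> (Bset eta T /\ Pset eta T).
  move=> T; split => [[[iT hZ] hP]|[[iT hZ] hP]]; split => //; split => //;
    move/PsetE: (hP) => [W [S [zW [[hS iS] eT]]]]; rewrite eT in hZ *;
    have [h1 h2] := PZ zW hS.
    by apply/h2; apply/h1.
  by apply/h1; apply/h2.
split; [|split; [|split; [|split]]].
- move=> T; split => [[hP hZ]|[[iT hZ] hP]]; split => //; split => //.
  exact: P_inv.
- exact: c2.
- move=> T; split => [[hB hP]|[hA hB]]; first by split => //; case: ((c2 T).2 (conj hB hP)).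
  split => //; case: hA => iT hZ; case: hB => _ hZ'.
  have [W [S [zW [hS [iS eT]]]]] := AB_P n0 iT hZ hZ'.
  by apply/PsetE; exists W, S.
- move=> n3 T; split => [[] //|hP]; split => //.
  move/PsetE: (hP) => [W [S [zW [[hS iS] ->]]]].
  have [Wc _] := zW.
  change (zx (rv (W * S) * (W * S))); rewrite rvWS //.
  apply: zx_mul; first by apply: zx_mul => //; exact: zx_rv.
  have hM : rv S * S = sc ((rv S * S) set0).
    apply: small => //; last by rewrite rv_mul rvK.
    by rewrite gi_mul gi_rv; case: hS => ->; rewrite ?rvN ?mulrNN.
  split; first by rewrite hM; exact: cen_sc.
  by apply: inv_mul => //; exact: inv_rv.
- move=> n4; have [T [hP hZ]] := ex4 n4; split; exists T => h.
    by apply: hZ; case: (h) => _ /(_ hP) [].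
  by apply: hZ; case: (h) => _ /(_ hP) [].
Qed.

End Clif.

Theorem mainTheorem9 :
  (* real Clifford algebras C\ell_{p,q}, n = p + q >= 2 *)
  (forall (R : realType) (p q : nat), (2 <= p + q)%N ->
     clifford_conclusion (@eta_pq R p q)) /\
  (* complex Clifford algebras C\ell(C^n), n >= 2 *)
  (forall (R : realType) (n : nat), (2 <= n)%N ->
     clifford_conclusion (fun _ : 'I_n => (1 : R[i]))).
Proof.
split.
  move=> R p q h; apply: conclusion => //.
    by move=> i; rewrite /eta_pq; case: ifP => _; rewrite expr2 ?mulrNN mulr1.
  by move=> m; rewrite pnatr_eq0.
move=> R n h; apply: conclusion => //; first by move=> i; rewrite expr1n.
by move=> m; rewrite pnatr_eq0.
Qed.
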